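(* Let $f:\mathcal X^n\to\mathbb R$ be sample-monotone, $x\in\mathcal X^n$, and $0<\varepsilon\le c_0$ for an absolute constant $c_0$. Suppose there exist $A<\infty$, an integer $\tilde k\in\{1,\dots,n\}$, and an $\ell_1$-unbiased $\varepsilon/16$-differentially private mechanism $\tilde M$ such that $\mathbb E[|\tilde M(x)-f(x)|]\le A\,\omega_f(x;\tilde k)e^{-\tilde k\varepsilon/16}$. Then $R_f(x)\le C e^{7\tilde k\varepsilon/16}$, where $C<\infty$ depends only on $A$ and $c_0$.
   Context: $d_H$ is the Hamming distance on $\mathcal X^n$; $x,x'$ neighboring if $d_H(x,x')\le1$. A mechanism $M$ is $\varepsilon$-differentially private if $\mathbb P(M(x)\in S)\le e^\varepsilon\mathbb P(M(x')\in S)$ for all neighboring $x,x'$ and measurable $S$. $M$ is $\ell_1$-unbiased if $\mathbb E|M(x)-f(x)|\le\mathbb E|M(x)-t|$ for all $x$ and $t\in\mathbb R$. $\omega_f(x;k)=\sup\{|f(x)-f(x')|:d_H(x,x')\le k\}$. The inverse sensitivity is $\mathrm{len}_f(x;t)=\inf\{d_H(x,x'):f(x')=t\}$; $f$ is sample-monotone if for every $x$ and $s,t$ with $f(x)\le s\le t$ or $t\le s\le f(x)$, $\mathrm{len}_f(x;s)\le\mathrm{len}_f(x;t)$. For $\eta>0$, $E_f(x;\eta)=\mathbb E[\omega_f(x;K)\mathbf 1\{K\le n\}]$ where $\mathbb P(K=i)=e^{-i\eta}(1-e^{-\eta})$, $i=0,1,\dots$, and $R_f(x)=E_f(x;\varepsilon/4)/E_f(x;\varepsilon/2)$.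 *)

(* Defs.v *)
From HB Require Import structures.
From mathcomp Require Import all_boot all_order all_algebra.
From mathcomp Require Import all_classical all_reals all_analysis.
From mathcomp Require Import Rstruct Rstruct_topology.

Set Implicit Arguments.
Unset Strict Implicit.
Unset Printing Implicit Defensive.

Import Order.TTheory GRing.Theory Num.Theory.
Local Open Scope classical_set_scope.
Local Open Scope ring_scope.

Definition hamming (X : Type) (n : nat) (x x' : 'I_n -> X) : nat :=
  #|[set i : 'I_n | `[< x i <> x' i >] ]|.

Section DefsR.
Variable R : realType.

Definition omega (X : Type) (n : nat) (f : ('I_n -> X) -> R)
  (x : 'I_n -> X) (k : nat) : R :=
  sup [set `|f x - f x'| | x' in [set x' | (hamming x x' <= k)%N]].

Definition len_f (X : Type) (n : nat) (f : ('I_n -> X) -> R)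
  (x : 'I_n -> X) (t : R) : \bar R :=
  ereal_inf [set ((hamming x x')%:R)%:E | x' in [set x' | f x' = t]].

Definition sample_monotone (X : Type) (n : nat) (f : ('I_n -> X) -> R) : Prop :=
  forall (x : 'I_n -> X) (s t : R),
    (f x <= s <= t) || (t <= s <= f x) ->
    (len_f f x s <= len_f f x t)%E.

(* E_f(x;eta) = E[ omega_f(x;K) 1{K <= n} ], K geometric:
   P(K = i) = e^{-i eta} (1 - e^{-eta}). *)
Definition E_f (X : Type) (n : nat) (f : ('I_n -> X) -> R)
  (x : 'I_n -> X) (eta : R) : R :=
  \sum_(0 <= i < n.+1)
     omega f x i * (expR (- (i%:R * eta)) * (1 - expR (- eta))).

Definition R_f (X : Type) (n : nat) (f : ('I_n -> X) -> R)
  (x : 'I_n -> X) (eps : R) : R :=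
  E_f f x (eps / 4) / E_f f x (eps / 2).

Definition differentially_private (X : Type) (n : nat)
  (M : ('I_n -> X) -> probability R R) (eps : R) : Prop :=
  forall (x x' : 'I_n -> X), (hamming x x' <= 1)%N ->
  forall S : set R, measurable S ->
    (M x S <= (expR eps)%:E * M x' S)%E.

Definition l1_unbiased (X : Type) (n : nat) (f : ('I_n -> X) -> R)
  (M : ('I_n -> X) -> probability R R) : Prop :=
  forall (x : 'I_n -> X) (t : R),
    (\int[M x]_y (`|y - f x|)%:E <= \int[M x]_y (`|y - t|)%:E)%E.

End DefsR.

(* Main.v *)
Set Warnings "-notation-overridden,-ambiguous-paths,-notation-incompatible-prefix".
Require Import Defs.
From HB Require Import structures.
From mathcomp Require Import all_boot all_order all_algebra.
From mathcomp Require Import all_classical all_reals all_analysis.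
From mathcomp Require Import Rstruct Rstruct_topology.
From mathcomp Require Import measurable_realfun.
From mathcomp Require Import zify ring lra.
Set Implicit Arguments.
Unset Strict Implicit.
Import Order.TTheory GRing.Theory Num.Theory.
Local Open Scope classical_set_scope.
Local Open Scope ring_scope.
Section Arith.
Variable R : realType.

Lemma key_ineq (q : R) : 0 <= q -> q <= 1 -> q ^+ 3 * (1 - q ^+ 4) <= 2 * (1 - q ^+ 3).
Proof.
move=> q0 q1.
have h3 : q ^+ 3 <= 1 by rewrite exprn_ile1.
have h30 : 0 <= q ^+ 3 by rewrite exprn_ge0.
have h4 : q ^+ 4 <= 1 by rewrite exprn_ile1.
have e4 : q ^+ 4 = q ^+ 3 * q by rewrite exprSr.
have e3 : q ^+ 3 = q * q * q by rewrite !exprSr expr0 mul1r.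
have A : q ^+ 3 * (1 - q ^+ 4) <= 1 - q ^+ 4.
  by rewrite ler_piMl // subr_ge0.
apply: le_trans A _.
rewrite e4 e3.
have qq : q * q * q <= q * q by rewrite ler_piMr // ?mulr_ge0.
nra.
Qed.

Lemma tele (q : R) k m :
  \sum_(k <= i < (k + m).+1) q ^+ (8 * i) * (1 - q ^+ 8) =
  q ^+ (8 * k) - q ^+ (8 * (k + m).+1).
Proof.
rewrite (eq_bigr (fun i => (- q ^+ (8 * i.+1)) - (- q ^+ (8 * i)))).
  by rewrite telescope_sumr; [rewrite opprK addrC | lia].
by move=> i _; rewrite mulnS exprD mulrBr mulr1 opprK addrC mulrC.
Qed.

Lemma invar (q : R) k m : 0 <= q -> q <= 1 ->
  \sum_(k.+1 <= i < (k + m).+1) q ^+ (5 * k + 3 * i) * (1 - q ^+ 4)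
   <= 2 * (q ^+ (8 * k) - q ^+ (5 * k + 3 * (k + m))).
Proof.
move=> q0 q1; elim: m => [|m IH].
  rewrite addn0 big_geq // (_ : (5 * k + 3 * k = 8 * k)%N); last lia.
  by rewrite subrr mulr0.
rewrite addnS big_nat_recr /=; last lia.
have e : (5 * k + 3 * (k + m).+1 = (5 * k + 3 * (k + m)) + 3)%N by lia.
rewrite e exprD.
set p := q ^+ (5 * k + 3 * (k + m)).
have p0 : 0 <= p by rewrite exprn_ge0.
have K := @key_ineq q q0 q1.
have K2 : p * (q ^+ 3 * (1 - q ^+ 4)) <= p * (2 * (1 - q ^+ 3)) by rewrite ler_wpM2l.
move: IH K2; set S := \sum_(_ <= _ < _) _; set Q := q ^+ (8 * k); set t := q ^+ 3; set u := q ^+ 4. move=> IH K2. rewrite -/p in IH. nra.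
Qed.


Lemma core (q K : R) (w : nat -> R) n k : 0 < q -> q <= 1 -> 0 <= K -> (k <= n)%N ->
  (forall i, 0 <= w i) -> (forall i j, (i <= j)%N -> w i <= w j) ->
  (forall i, w i * q ^+ i <= K * w k * q ^+ k) ->
  q ^+ (4 * k) * \sum_(0 <= i < n.+1) w i * (q ^+ (4 * i) * (1 - q ^+ 4))
  <= (1 + 2 * K) * \sum_(0 <= i < n.+1) w i * (q ^+ (8 * i) * (1 - q ^+ 8)).
Proof.
move=> q0 q1 K0 kn w0 wm wK.
have q0' : 0 <= q by exact: ltW.
have q8 : q ^+ 8 <= 1 by rewrite exprn_ile1.
have q4 : q ^+ 4 <= 1 by rewrite exprn_ile1.
have q84 : q ^+ 8 <= q ^+ 4 by rewrite ler_wiXn2l.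
set G := fun i => w i * (q ^+ (8 * i) * (1 - q ^+ 8)).
have G0 : forall i, 0 <= G i.
  by move=> i; rewrite /G mulr_ge0 ?mulr_ge0 ?exprn_ge0 ?subr_ge0.
set F := \sum_(0 <= i < n.+1) G i.
have Fsplit : forall j, (j <= n.+1)%N -> \sum_(0 <= i < j) G i <= F /\ \sum_(j <= i < n.+1) G i <= F.
  move=> j jn.
  have -> : F = \sum_(0 <= i < j) G i + \sum_(j <= i < n.+1) G i.
    by rewrite /F (big_cat_nat _ (n:=j) (m:=0) (p:=n.+1)).
  split; [rewrite lerDl | rewrite lerDr]; exact: sumr_ge0.
rewrite (big_cat_nat _ (n:=k.+1) (m:=0) (p:=n.+1)) //= mulrDr mulrDl mul1r.
apply: lerD.
  apply: le_trans (proj1 (Fsplit k.+1 _)); last by [].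
  rewrite mulr_sumr; apply: ler_sum_nat => i /andP[_ ik].
  have ik' : (i <= k)%N by [].
  have a0 : 0 <= q ^+ (4 * k) by rewrite exprn_ge0.
  have ab : q ^+ (4 * k) <= q ^+ (4 * i) by rewrite ler_wiXn2l // leq_mul2l ik'.
  have b0 : 0 <= q ^+ (4 * i) by rewrite exprn_ge0.
  have e8 : q ^+ (8 * i) = q ^+ (4 * i) * q ^+ (4 * i) by rewrite -exprD; congr (_ ^+ _); lia.
  rewrite /G e8.
  have wi := w0 i.
  have c1 : 0 <= 1 - q ^+ 4 by rewrite subr_ge0.
  have h1 : q ^+ (4 * k) * q ^+ (4 * i) <= q ^+ (4 * i) * q ^+ (4 * i) by rewrite ler_wpM2r.
  have h2 : (q ^+ (4 * k) * q ^+ (4 * i)) * (1 - q ^+ 4) <= (q ^+ (4 * i) * q ^+ (4 * i)) * (1 - q ^+ 8).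
    apply: le_trans (_ : _ <= (q ^+ (4 * i) * q ^+ (4 * i)) * (1 - q ^+ 4)) _.
      by rewrite ler_wpM2r.
    by rewrite ler_wpM2l ?mulr_ge0 // lerB.
  have := ler_wpM2l wi h2.
  move=> h3; apply: le_trans h3; rewrite le_eqVlt; apply/orP; left; apply/eqP; ring.
set W := w k.
have W0 : 0 <= W := w0 k.
have step1 : q ^+ (4 * k) * \sum_(k.+1 <= i < n.+1) w i * (q ^+ (4 * i) * (1 - q ^+ 4))
   <= K * W * \sum_(k.+1 <= i < n.+1) q ^+ (5 * k + 3 * i) * (1 - q ^+ 4).
  rewrite !mulr_sumr; apply: ler_sum_nat => i _.
  have e1 : q ^+ (4 * k) * (w i * (q ^+ (4 * i) * (1 - q ^+ 4))) =
     (w i * q ^+ i) * (q ^+ (4 * k + 3 * i) * (1 - q ^+ 4)).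
    rewrite exprD (_ : (4 * i = i + 3 * i)%N); last lia.
    rewrite exprD; ring.
  have e2 : K * W * (q ^+ (5 * k + 3 * i) * (1 - q ^+ 4)) =
     (K * W * q ^+ k) * (q ^+ (4 * k + 3 * i) * (1 - q ^+ 4)).
    rewrite (_ : (5 * k + 3 * i = k + (4 * k + 3 * i))%N); last lia.
    rewrite exprD; ring.
  rewrite e1 e2 ler_wpM2r //.
  by rewrite mulr_ge0 ?exprn_ge0 ?subr_ge0.
apply: le_trans step1 _.
have [m nm] : exists m, n = (k + m)%N by exists (n - k)%N; lia.
have step2 := @invar q k m q0' q1.
rewrite -nm in step2.
have step3 : q ^+ (8 * n.+1) <= q ^+ (5 * k + 3 * n) by rewrite ler_wiXn2l //; lia.
have step4 : \sum_(k <= i < n.+1) W * (q ^+ (8 * i) * (1 - q ^+ 8)) <= \sum_(k <= i < n.+1) G i.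
  apply: ler_sum_nat => i /andP[ki _]; rewrite /G ler_wpM2r ?mulr_ge0 ?exprn_ge0 ?subr_ge0 //.
  exact: wm.
have step5 : \sum_(k <= i < n.+1) W * (q ^+ (8 * i) * (1 - q ^+ 8)) = W * (q ^+ (8 * k) - q ^+ (8 * n.+1)).
  by rewrite -mulr_sumr nm tele.
have F2 := proj2 (Fsplit k (leqW kn)).
have KW0 : 0 <= K * W by rewrite mulr_ge0.
apply: le_trans (_ : _ <= K * W * (2 * (q ^+ (8 * k) - q ^+ (8 * n.+1)))) _.
  rewrite ler_wpM2l //; apply: le_trans step2 _.
  by rewrite ler_wpM2l // lerB.
rewrite step5 in step4.
have : K * (W * (q ^+ (8 * k) - q ^+ (8 * n.+1))) <= K * F.
  rewrite ler_wpM2l //; lra.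
move=> h; apply: (@le_trans _ _ (2 * (K * F))); last by rewrite le_eqVlt; apply/orP; left; apply/eqP; ring.
rewrite (_ : K * W * (2 * (q ^+ (8 * k) - q ^+ (8 * n.+1))) = 2 * (K * (W * (q ^+ (8 * k) - q ^+ (8 * n.+1))))); last by ring.
by rewrite ler_wpM2l.
Qed.

End Arith.
Local Notation RR := (Rdefinitions.R : realType).

Lemma hamE (X : Type) n (x x' : 'I_n -> X) :
  hamming x x' = #|finset (fun i => `[< x i <> x' i >])|.
Proof.
apply: eq_card => i; rewrite finset.inE /in_mem /=. by apply/asboolP/idP.
Qed.

Lemma hamming_sym (X : Type) n (x x' : 'I_n -> X) : hamming x x' = hamming x' x.
Proof.
rewrite !hamE; apply: eq_card => i; rewrite !finset.inE.
by apply/asboolP/asboolP => h e; apply: h.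
Qed.

Lemma hamming_refl (X : Type) n (x : 'I_n -> X) : hamming x x = 0%N.
Proof.
rewrite hamE; apply/eqP; rewrite cards_eq0; apply/eqP; apply/setP => i.
by rewrite !finset.inE; apply/asboolP.
Qed.

Lemma hamming0 (X : Type) n (x x' : 'I_n -> X) : hamming x x' = 0%N -> x = x'.
Proof.
rewrite hamE => /eqP; rewrite cards_eq0 => /eqP H.
apply: funext => i; apply: contrapT => ne.
have : i \in finset (fun i => `[< x i <> x' i >]) by rewrite finset.inE; apply/asboolP.
by rewrite H finset.inE.
Qed.

Lemma group_dp (X : Type) n (M : ('I_n -> X) -> probability RR RR) (eps : RR) :
  0 <= eps -> differentially_private M eps ->
  forall h x x', hamming x x' = h -> forall S, measurable S ->
  (M x S <= (expR (h%:R * eps))%:E * M x' S)%E.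
Proof.
move=> e0 DP; elim=> [|h IH] x x' hx S mS.
  by rewrite (hamming0 hx) mul0r exp.expR0 mul1e.
have : exists j, j \in finset (fun i => `[< x i <> x' i >]).
  apply/set0Pn; apply/eqP => E; move: hx; rewrite hamE E cards0 //.
case=> j jD.
pose y := fun i => if i == j then x' j else x i.
have hxy : (hamming x y <= 1)%N.
  rewrite hamE -(cards1 j); apply: subset_leq_card; apply/fintype.subsetP => i.
  rewrite !finset.inE /y; case: eqP => // _ /asboolP; by [].
have hyx : hamming y x' = h.
  move: hx; rewrite !hamE (cardsD1 j) jD add1n => -[<-].
  apply: eq_card => i; rewrite !finset.inE /y.
  case: eqP => [->|ne] /=.
    by apply/asboolP => /(_ erefl).
  by [].
apply: le_trans (DP _ _ hxy _ mS) _.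
have := IH _ _ hyx _ mS.
move=> h2; apply: le_trans (lee_wpmul2l _ h2) _.
  by rewrite lee_fin expR_ge0.
rewrite muleA -EFinM -exp.expRD; apply: lee_wpmul2r => //.
by rewrite lee_fin ler_expR -natr1; lra.
Qed.

Lemma mabs (t : RR) : measurable_fun [set: RR] (EFin \o (fun y : RR => `|y - t|)).
Proof.
apply/measurable_realfun.measurable_EFinP.
apply: measurableT_comp; first exact: normr_measurable.
by apply: measurable_funB.
Qed.

Lemma transfer (P Q : probability RR RR) (c : RR) (g : RR -> RR) :
 (forall S, measurable S -> (P S <= (expR c)%:E * Q S)%E) ->
 measurable_fun [set: RR] (EFin \o g) -> (forall y, 0 <= g y) ->
 (\int[P]_y (g y)%:E <= (expR c)%:E * \int[Q]_y (g y)%:E)%E.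
Proof.
move=> PQ mg g0.
pose r := NngNum (expR_ge0 c).
have H := @ge0_le_measure_integral _ _ _ P (mscale r Q) PQ (fun y => (g y)%:E) setT measurableT.
apply: le_trans (H _ _) _.
- by move=> y; rewrite lee_fin.
- exact: mg.
by rewrite ge0_integral_mscale //= => y _; rewrite lee_fin.
Qed.

Lemma keyT (X : Type) n (f : ('I_n -> X) -> RR) (M : ('I_n -> X) -> probability RR RR)
  (eps : RR) x x' : 0 <= eps -> l1_unbiased f M -> differentially_private M eps ->
  (`|f x - f x'|%:E <= (expR ((hamming x x')%:R * eps))%:E * \int[M x]_y (`|y - f x|)%:E
     + (expR ((hamming x x')%:R * eps))%:E * \int[M x]_y (`|y - f x|)%:E)%E.
Proof.
move=> e0 UB DP.
have T := @transfer (M x') (M x) ((hamming x x')%:R * eps) (fun y => `|y - f x|)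
   (group_dp e0 DP (esym (hamming_sym x x'))) (mabs _) (fun y => normr_ge0 _).
have step : (`|f x - f x'|%:E <= \int[M x']_y ((`|y - f x|)%:E + (`|y - f x'|)%:E))%E.
  have -> : (`|f x - f x'|%:E = \int[M x']_y (cst (`|f x - f x'|%:E) y))%E.
    rewrite integral_cst // -[LHS]mule1; congr (_ * _)%E; exact/esym/probability_setT.
  apply: ge0_le_integral => //.
  - by move=> y _; rewrite lee_fin.
  - by apply: emeasurable_funD; apply: mabs.
  - move=> y _; rewrite /cst -EFinD lee_fin.
    by rewrite (distrC y (f x)); apply: ler_distD.
rewrite ge0_integralD // in step; last 2 first.
  - exact: mabs.
  - exact: mabs.
apply: le_trans step _.
apply: leeD => //.
apply: le_trans (UB x' (f x)) T.
Qed.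

Section Omega.
Variables (X : Type) (n : nat) (f : ('I_n -> X) -> RR) (x : 'I_n -> X) (B : RR).
Hypothesis hB : forall x', `|f x' - f x| <= B.

Let S i := [set `|f x - f x'| | x' in [set x' | (hamming x x' <= i)%N]].

Lemma S0 i : S i 0.
Proof. by exists x; rewrite /= ?hamming_refl // subrr normr0. Qed.

Lemma Ssup i : has_sup (S i).
Proof.
split; first by exists 0; exact: S0.
by exists B => _ [x' _ <-]; rewrite distrC.
Qed.

Lemma omega_ge0 i : 0 <= omega f x i.
Proof. exact: (sup_upper_bound (Ssup i) (S0 i)). Qed.

Lemma omega_mono i j : (i <= j)%N -> omega f x i <= omega f x j.
Proof.
move=> ij; apply: sup_le; last exact: Ssup; last by exists 0; exact: S0.
move=> _ [x' hx' <-]; apply/downP; exists (`|f x - f x'|) => //.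
by exists x' => //=; apply: leq_trans ij.
Qed.

Lemma omega_le i b : (forall x', (hamming x x' <= i)%N -> `|f x - f x'| <= b) ->
  omega f x i <= b.
Proof.
move=> H; apply: ge_sup; first by exists 0; exact: S0.
by move=> _ [x' hx' <-]; apply: H.
Qed.
End Omega.

Theorem proposition4p2 :
  exists c0 : Rdefinitions.R, 0 < c0 /\
  forall A : Rdefinitions.R,
  exists C : Rdefinitions.R,
  forall (X : Type) (n : nat) (f : ('I_n -> X) -> Rdefinitions.R)
         (x : 'I_n -> X) (eps : Rdefinitions.R) (k : nat)
         (M : ('I_n -> X) -> probability (Rdefinitions.R : realType) (Rdefinitions.R : realType)),
    sample_monotone f ->
    (exists B : Rdefinitions.R, forall x' : 'I_n -> X, `|f x' - f x| <= B) ->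
    0 < eps -> eps <= c0 ->
    (1 <= k <= n)%N ->
    l1_unbiased f M ->
    differentially_private M (eps / 16) ->
    (\int[M x]_y (`|y - f x|)%:E
       <= (A * omega f x k * expR (- (k%:R * eps / 16)))%:E)%E ->
    R_f f x eps <= C * expR (7 * k%:R * eps / 16).
Proof.
exists 1; split => //.
move=> A; exists (1 + 2 * (2 * `|A|)).
move=> X n f x eps k M _ [B hB] e0 _ /andP[k1 kn] UB DP Hint.
set a := eps / 16.
have a0 : 0 < a by rewrite /a divr_gt0.
set q := expR (- a).
have q0 : 0 < q by exact: expR_gt0.
have q1 : q <= 1.
  by rewrite /q -exp.expR0 ler_expR; lra.
set W := omega f x k.
have W0 : 0 <= W by exact: omega_ge0 hB k.
set r := A * W * expR (- (k%:R * eps / 16)).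
move: Hint; set I := (X in (X <= _)%E) => Hint.
have I0 : (0 <= I)%E by apply: integral_ge0 => y _; rewrite lee_fin.
have r0 : 0 <= r by rewrite -lee_fin; apply: le_trans I0 Hint.
have hw : forall i, omega f x i * q ^+ i <= (2 * `|A|) * W * q ^+ k.
  move=> i.
  have om : omega f x i <= 2 * expR (i%:R * a) * r.
    apply: omega_le => x' hx'.
    have K := @keyT X n f M a x x' (ltW a0) UB DP.
    set eh := expR ((hamming x x')%:R * a) in K.
    have eh0 : (0 <= eh%:E)%E by rewrite lee_fin expR_ge0.
    have K2 : (eh%:E * I <= (eh * r)%:E)%E by rewrite EFinM; apply: lee_wpmul2l.
    have K3 := le_trans K (leeD K2 K2).
    rewrite -EFinD lee_fin in K3.
    apply: le_trans K3 _.
    have : eh <= expR (i%:R * a).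
      rewrite /eh ler_expR ler_wpM2r ?(ltW a0) // ler_nat //.
    move=> h; nra.
  have qi : expR (i%:R * a) * q ^+ i = 1.
    by rewrite /q -expRM_natl -exp.expRD mulrN subrr exp.expR0.
  have qk : expR (- (k%:R * eps / 16)) = q ^+ k.
    by rewrite /q -expRM_natl /a; congr expR; rewrite mulrN mulrA.
  have qi0 : 0 <= q ^+ i by rewrite exprn_ge0 // ltW.
  have : omega f x i * q ^+ i <= 2 * expR (i%:R * a) * r * q ^+ i by rewrite ler_wpM2r.
  move=> h; apply: le_trans h _.
  rewrite (_ : 2 * expR (i%:R * a) * r * q ^+ i = 2 * r * (expR (i%:R * a) * q ^+ i)); last by ring.
  rewrite qi mulr1 /r qk.
  have qk0 : 0 <= q ^+ k by rewrite exprn_ge0 // ltW.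
  have : A * W * q ^+ k <= `|A| * W * q ^+ k.
    by rewrite ler_wpM2r // ler_wpM2r // ler_norm.
  move=> h2; nra.
have K0 : 0 <= 2 * `|A| by rewrite mulr_ge0.
have CORE := @core _ q (2 * `|A|) (omega f x) n k q0 q1 K0 kn (omega_ge0 hB) (omega_mono hB) hw.
have E1E : E_f f x (eps / 4) = \sum_(0 <= i < n.+1) omega f x i * (q ^+ (4 * i) * (1 - q ^+ 4)).
  rewrite /E_f; apply: eq_bigr => i _.
  rewrite /q -!expRM_natl natrM /a; congr (_ * (expR _ * (1 - expR _))); by field.
have E2E : E_f f x (eps / 2) = \sum_(0 <= i < n.+1) omega f x i * (q ^+ (8 * i) * (1 - q ^+ 8)).
  rewrite /E_f; apply: eq_bigr => i _.
  rewrite /q -!expRM_natl natrM /a; congr (_ * (expR _ * (1 - expR _))); by field.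
rewrite -E1E -E2E in CORE.
have q8 : q ^+ 8 <= 1 by rewrite exprn_ile1 // ltW.
have q4 : q ^+ 4 <= 1 by rewrite exprn_ile1 // ltW.
have E10 : 0 <= E_f f x (eps / 4).
  rewrite E1E; apply: sumr_ge0 => i _; rewrite mulr_ge0 ?(omega_ge0 hB) ?mulr_ge0 ?exprn_ge0 ?subr_ge0 ?(ltW q0) //.
have E20 : 0 <= E_f f x (eps / 2).
  rewrite E2E; apply: sumr_ge0 => i _; rewrite mulr_ge0 ?(omega_ge0 hB) ?mulr_ge0 ?exprn_ge0 ?subr_ge0 ?(ltW q0) //.
have C0 : 0 <= 1 + 2 * (2 * `|A|) by rewrite addr_ge0 // !mulr_ge0.
have e70 : 0 <= expR (7 * k%:R * eps / 16) by exact: expR_ge0.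
rewrite /R_f.
have [E2z|E2p] := eqVneq (E_f f x (eps / 2)) 0.
  by rewrite E2z invr0 mulr0 mulr_ge0.
have E2p' : 0 < E_f f x (eps / 2) by rewrite lt_def E2p E20.
rewrite ler_pdivrMr //.
have prod1 : 1 <= q ^+ (4 * k) * expR (7 * k%:R * eps / 16).
  rewrite /q -expRM_natl -exp.expRD; rewrite -[leLHS]exp.expR0 ler_expR natrM /a.
  have kk : 0 <= k%:R :> RR by [].
  nra.
set E1 := E_f f x (eps / 4) in CORE E10 *.
set E2 := E_f f x (eps / 2) in CORE E20 E2p' *.
set e7 := expR (7 * k%:R * eps / 16) in e70 prod1 *.
set Q := q ^+ (4 * k) in CORE prod1.
have h1 : E1 <= Q * e7 * E1 by rewrite ler_peMl.
have h2 : e7 * (Q * E1) <= e7 * ((1 + 2 * (2 * `|A|)) * E2) by rewrite ler_wpM2l.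
apply: le_trans h1 _.
rewrite (_ : Q * e7 * E1 = e7 * (Q * E1)); last by ring.
apply: le_trans h2 _.
by rewrite le_eqVlt; apply/orP; left; apply/eqP; ring.
Qed.
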